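(* Let $d\ge2$. For any matrix $X\in\mathbb{C}^{d^2\times d^2}$ (acting on $\mathbb{C}^d\otimes\mathbb{C}^d$), $$\sum_{\mathbf{a}\in\{0,\dots,d-1\}^2} (W_\mathbf{a}\otimes W_\mathbf{a})\,X\,(W_\mathbf{a}\otimes W_\mathbf{a})^\dagger = \sum_{\mathbf{a}\in\{0,\dots,d-1\}^2} \operatorname{tr}\!\big(X\,(W_\mathbf{a}^\dagger\otimes W_\mathbf{a})\big)\, W_\mathbf{a}\otimes W_\mathbf{a}^\dagger.$$
   Context: $\{|i\rangle\}_{i=0}^{d-1}$ is the standard basis of $\mathbb{C}^d$, indices mod $d$. Let $\tau=\exp(2\pi i\frac{d+1}{2d})$, $\omega=\tau^2=\exp(2\pi i/d)$, $S=\sum_{i=0}^{d-1}|i+1\rangle\langle i|$, $C=\sum_{i=0}^{d-1}\omega^i|i\rangle\langle i|$, and for $\mathbf{a}=(a_1,a_2)\in\mathbb{Z}^2$ let $W_\mathbf{a}=\tau^{a_1a_2}S^{a_1}C^{a_2}$. *)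

(* Defs.v *)
From HB Require Import structures.
From mathcomp Require Import all_boot all_order all_algebra.
From mathcomp Require Import reals trigo.
From mathcomp.real_closed Require Import complex mxtens.
Set Implicit Arguments. Unset Strict Implicit. Unset Printing Implicit Defensive.
Import Order.TTheory GRing.Theory Num.Theory.
Local Open Scope ring_scope.
Local Open Scope complex_scope.

Section Weyl.
Variable R : realType.
Variable d : nat.

Definition theta : R := 2 * pi * ((d + 1)%:R / (2 * d)%:R).
Definition tau : R[i] := cos theta +i* sin theta.
Definition omega : R[i] := tau ^+ 2.

Definition shift : 'M[R[i]]_d := \matrix_(i, j) ((val i == (val j + 1) %% d)%N)%:R.
Definition clock : 'M[R[i]]_d := \matrix_(i, j) ((i == j)%:R * omega ^+ val i).

(* matrix power (d is not syntactically a successor) *)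
Definition mxpow (A : 'M[R[i]]_d) (k : nat) : 'M[R[i]]_d := iter k (mulmx A) 1%:M.

Definition weyl (a1 a2 : nat) : 'M[R[i]]_d :=
  tau ^+ (a1 * a2) *: (mxpow shift a1 *m mxpow clock a2).
End Weyl.

Definition adj (R : realType) m n (A : 'M[R[i]]_(m, n)) : 'M[R[i]]_(n, m) :=
  map_mx (@conjc R) A^T.

(* Main.v *)
Require Import Defs.
From HB Require Import structures.
From mathcomp Require Import all_boot all_order all_algebra.
From mathcomp Require Import reals trigo.
From mathcomp.real_closed Require Import complex mxtens.
From mathcomp Require Import ring lra.
Import Order.TTheory GRing.Theory Num.Theory.
Local Open Scope ring_scope.
Local Open Scope complex_scope.
Local Notation cj := (@conjc _).

Section Phase.
Variable R : realType.
Definition E (x : R) : R[i] := cos x +i* sin x.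

Lemma ED x y : E (x + y) = E x * E y.
Proof. rewrite /E cosD sinD /=; congr (_ +i* _); ring. Qed.

Lemma EX x m : E x ^+ m = E (x *+ m).
Proof.
elim: m => [|m IH]; first by rewrite expr0 mulr0n /E cos0 sin0.
by rewrite exprS IH mulrS ED.
Qed.

Lemma E2pi : E (pi *+ 2) = 1.
Proof. by rewrite /E cos2pi sin2pi. Qed.

Lemma conjEE x : (cj (E x)) * E x = 1.
Proof.
rewrite /E /=; have := cos2Dsin2 x => h.
apply/eqP; rewrite eq_complex /=; apply/andP; split; apply/eqP.
  by rewrite -h; ring.
ring.
Qed.

Lemma E_neq1 y : 0 < y < pi -> E (y *+ 2) != 1.
Proof.
move=> hy; have s0 := sin_gt0_pi hy.
rewrite /E eq_complex /= negb_and; apply/orP; left.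
rewrite cos_mulr2n cos2sin2.
apply/eqP => h.
have : sin y ^+ 2 = 0 by move: h; set s := sin y ^+ 2 => h; rewrite -[s]subr0; lra.
by move/eqP; rewrite sqrf_eq0 gt_eqF.
Qed.

Variable n : nat.
Local Notation d := n.+2.

Lemma tauE : tau R d = E (theta R d). Proof. by []. Qed.

Lemma omegaE : omega R d = E ((pi / d%:R) *+ 2).
Proof.
rewrite /omega tauE EX.
have -> : theta R d *+ 2 = pi *+ 2 + (pi / d%:R) *+ 2.
  rewrite /theta natrD natrM.
  have hd : (d%:R : R) != 0 by rewrite pnatr_eq0.
  field. by move: hd; rewrite -addn2 natrD addrC.
by rewrite ED E2pi mul1r.
Qed.

Lemma omegaX m : omega R d ^+ m = E ((pi / d%:R *+ m) *+ 2).
Proof. by rewrite omegaE EX -mulrnA mulnC mulrnA. Qed.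

Lemma omega_d : omega R d ^+ d = 1.
Proof.
rewrite omegaX (_ : pi / d%:R *+ d = pi) ?E2pi //.
by rewrite -mulr_natr mulfVK // pnatr_eq0.
Qed.

Lemma omega_neq1 m : (0 < m < d)%N -> omega R d ^+ m != 1.
Proof.
move=> /andP[m0 md]; rewrite omegaX; apply: E_neq1.
have dp : (0 : R) < d%:R by rewrite ltr0n.
rewrite -mulr_natr mulr_gt0 ?divr_gt0 ?pi_gt0 ?ltr0n //=.
by rewrite mulrAC ltr_pdivrMr // ltr_pM2l ?pi_gt0 // ltr_nat.
Qed.

Lemma conj_tau k : (cj (tau R d ^+ k)) * tau R d ^+ k = 1.
Proof. by rewrite rmorphXn -exprMn tauE conjEE expr1n. Qed.

Local Notation C := (R[i]).
Definition chi (x : 'I_d) : C := omega R d ^+ x.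

Lemma omega_mod m : omega R d ^+ (m %% d) = omega R d ^+ m.
Proof. by rewrite [in RHS](divn_eq m d) exprD mulnC exprM omega_d expr1n mul1r. Qed.

Lemma chiD x y : chi (x + y) = chi x * chi y.
Proof. by rewrite /chi /= omega_mod exprD. Qed.

Lemma chi0 : chi 0 = 1.
Proof. by rewrite /chi expr0. Qed.

Lemma conj_omega : (cj (omega R d)) * omega R d = 1.
Proof. exact: conj_tau 2. Qed.

Lemma conj_chi x : (cj (chi x)) = chi (- x).
Proof.
have h : chi x * chi (- x) = 1 by rewrite -chiD subrr chi0.
rewrite -[LHS]mulr1 -h mulrA /chi rmorphXn -exprMn conj_omega expr1n mul1r //.
Qed.

Lemma chi_sum x : \sum_(a < d) chi x ^+ a = (x == 0)%:R * d%:R.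
Proof.
case: eqP => [->|/eqP x0].
  by rewrite chi0 mul1r (eq_bigr (fun _ => 1)) ?sumr_const ?card_ord // => a _; rewrite expr1n.
rewrite mul0r.
have h1 : chi x ^+ d - 1 = 0 by rewrite /chi exprAC omega_d expr1n subrr.
rewrite subrX1 in h1.
move/eqP: h1; rewrite mulf_eq0 => /orP[|/eqP //].
rewrite subr_eq0 /chi => h; exfalso; move: h; apply/negP; apply: omega_neq1.
rewrite ltn_ord andbT lt0n; apply: contra x0 => /eqP h; apply/eqP/val_inj => /=; exact: h.
Qed.

Lemma shiftE i j : shift R d i j = (i == j + 1)%:R.
Proof.
rewrite /shift mxE; congr (_ %:R); rewrite -val_eqE /=.
Qed.

Lemma sum_pick (c : 'I_d) (F : 'I_d -> C) : \sum_l F l * (l == c)%:R = F c.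
Proof. by rewrite (bigD1 c) //= eqxx mulr1 big1 ?addr0 // => l /negbTE ->; rewrite mulr0. Qed.

Lemma mxpow_shift k i j : mxpow (shift R d) k i j = (i == j + inZp k)%:R.
Proof.
elim: k i j => [|k IH] i j.
  rewrite /mxpow /= mxE. 
  have -> : inZp 0 = 0 :> 'I_d by apply: val_inj.
  by rewrite addr0.
rewrite /mxpow iterS -/(mxpow _ _) mxE.
under eq_bigr do rewrite shiftE IH.
have -> : inZp k.+1 = inZp k + 1 :> 'I_d.
  by apply: val_inj => /=; rewrite modnDm addn1.
have := sum_pick (j + inZp k) (fun l => (i == l + 1)%:R); rewrite /= => ->.
by rewrite addrA.
Qed.

Lemma mxpow_clock k i j : mxpow (clock R d) k i j = (i == j)%:R * omega R d ^+ (k * i).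
Proof.
elim: k i j => [|k IH] i j.
  by rewrite /mxpow /= mxE mul0n expr0 mulr1.
rewrite /mxpow iterS -/(mxpow _ _) mxE.
under eq_bigr do rewrite IH mxE.
rewrite (bigD1 i) //= big1 ?addr0 => [|l /negbTE]; last by rewrite eq_sym => ->; rewrite !mul0r.
rewrite eqxx !mul1r mulSn exprD.
by rewrite mulrCA.
Qed.

Lemma weylE (a1 a2 : 'I_d) i j :
  weyl R d a1 a2 i j = tau R d ^+ (a1 * a2) * ((i == j + a1)%:R * chi j ^+ a2).
Proof.
rewrite /weyl mxE mxE.
under eq_bigr do rewrite mxpow_shift mxpow_clock valZpK.
rewrite (bigD1 j) //= big1 ?addr0 => [|l /negbTE]; last by rewrite eq_sym => ->; rewrite !mul0r mulr0.
by rewrite eqxx mul1r /chi -exprM [(a2 * j)%N]mulnC.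
Qed.

Local Notation idx := (@mxtens_index d d).

Lemma sum_tens (F : 'I_(d * d) -> C) :
  \sum_j F j = \sum_(j1 < d) \sum_(j2 < d) F (idx (j1, j2)).
Proof.
rewrite pair_big /= (reindex (@mxtens_index d d)) /=.
  by apply: eq_bigr => -[].
by exists (@mxtens_unindex d d) => x _; rewrite (mxtens_indexK, mxtens_unindexK).
Qed.

Lemma sum_pickl (c : 'I_d) (F : 'I_d -> C) : \sum_l (l == c)%:R * F l = F c.
Proof. by rewrite -(sum_pick c F); apply: eq_bigr => l _; rewrite mulrC. Qed.

Lemma sum_pick2 (i a : 'I_d) (F : 'I_d -> C) : \sum_j (i == j + a)%:R * F j = F (i - a).
Proof.
rewrite -sum_pickl; apply: eq_bigr => j _; congr (_%:R * _).
by rewrite eq_sym -subr_eq opprK.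
Qed.

Lemma adjE m k (M : 'M[C]_(m, k)) i j : adj M i j = (cj (M j i)).
Proof. by rewrite /adj !mxE. Qed.

Lemma conj_nat (b : bool) : (cj (b%:R : C)) = b%:R.
Proof. by rewrite rmorph_nat. Qed.

Lemma conjM (x y : C) : (cj (x * y)) = (cj x) * (cj y).
Proof. exact: rmorphM. Qed.

Section Entries.
Variables a1 a2 : 'I_d.
Local Notation W := (weyl R d a1 a2).
Local Notation t := (tau R d ^+ (a1 * a2)).

Lemma weylcE i j : (cj (W i j)) = (cj t) * ((i == j + a1)%:R * (cj (chi j ^+ a2))).
Proof. by rewrite weylE !conjM conj_nat. Qed.

Lemma L1 m (Y : 'M[C]_(d * d, m)) i1 i2 l :
  ((W *t W) *m Y) (idx (i1, i2)) l
  = (t * chi (i1 - a1) ^+ a2) * (t * chi (i2 - a1) ^+ a2) * Y (idx (i1 - a1, i2 - a1)) l.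
Proof.
rewrite mxE sum_tens.
have re : forall (e1 e2 x y z u v : C), u * (e1 * x) * (v * (e2 * y)) * z
   = e1 * (e2 * (u * x * (v * y) * z)) by move=> *; ring.
under eq_bigr do under eq_bigr do rewrite tensmxE !weylE re.
under eq_bigr do rewrite -mulr_sumr sum_pick2.
by rewrite sum_pick2.
Qed.

Lemma L2 m (Y : 'M[C]_(m, d * d)) p k1 k2 :
  (Y *m adj (W *t W)) p (idx (k1, k2))
  = Y p (idx (k1 - a1, k2 - a1)) * (cj ((t * chi (k1 - a1) ^+ a2) * (t * chi (k2 - a1) ^+ a2))).
Proof.
rewrite mxE sum_tens.
have re : forall (e1 e2 x y z u v : C), z * (u * (e1 * x) * (v * (e2 * y)))
   = e1 * (e2 * (z * (u * x * (v * y)))) by move=> *; ring.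
under eq_bigr do under eq_bigr do rewrite adjE tensmxE conjM !weylcE re.
under eq_bigr do rewrite -mulr_sumr sum_pick2.
by rewrite sum_pick2 !conjM.
Qed.

Lemma L3 m (Y : 'M[C]_(m, d * d)) p j1 j2 :
  (Y *m (adj W *t W)) p (idx (j1, j2))
  = Y p (idx (j1 - a1, j2 + a1)) * ((cj (t * chi (j1 - a1) ^+ a2)) * (t * chi j2 ^+ a2)).
Proof.
rewrite mxE sum_tens.
have re : forall (e1 e2 x y z u v : C), z * (u * (e1 * x) * (v * (e2 * y)))
   = e1 * ((z * (u * x * (v * y))) * e2) by move=> *; ring.
under eq_bigr do under eq_bigr do rewrite tensmxE adjE weylcE weylE re.
under eq_bigr do rewrite -mulr_sumr sum_pick.
by rewrite sum_pick2 !conjM.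
Qed.

Lemma conjX (x : C) k : cj (x ^+ k) = (cj x) ^+ k.
Proof. exact: rmorphXn. Qed.

Lemma conj_chiX x k : cj (chi x ^+ k) = chi (- x) ^+ k.
Proof. by rewrite conjX conj_chi. Qed.

Lemma lhs_entry (X : 'M[C]_(d * d)) i1 i2 k1 k2 :
  ((W *t W) *m X *m adj (W *t W)) (idx (i1, i2)) (idx (k1, k2))
  = chi (i1 + i2 - k1 - k2) ^+ a2 * X (idx (i1 - a1, i2 - a1)) (idx (k1 - a1, k2 - a1)).
Proof.
rewrite L2 L1 !conjM !conj_chiX.
set Xv := X _ _.
transitivity ((cj t * t) * (cj t * t) *
   ((chi (i1 - a1) * chi (i2 - a1) * chi (- (k1 - a1)) * chi (- (k2 - a1))) ^+ a2) * Xv).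
  by rewrite !exprMn; ring.
rewrite conj_tau !mul1r -!chiD; congr (chi _ ^+ _ * _); ring.
Qed.

Lemma rhs_entry (X : 'M[C]_(d * d)) i1 i2 k1 k2 :
  \tr (X *m (adj W *t W)) * (W *t adj W) (idx (i1, i2)) (idx (k1, k2))
  = (a1 == i1 - k1)%:R * ((k2 == i2 + a1)%:R * \sum_(j1 < d) \sum_(j2 < d)
      chi (j2 - (j1 - a1 - k1 + i2)) ^+ a2 * X (idx (j1, j2)) (idx (j1 - a1, j2 + a1))).
Proof.
rewrite /mxtrace sum_tens.
under eq_bigr do under eq_bigr do rewrite L3.
rewrite tensmxE adjE weylcE weylE.
have E1 : (i1 == k1 + a1) = (a1 == i1 - k1) by rewrite [RHS]eq_sym subr_eq addrC.
rewrite E1 mulr_suml mulr_sumr mulr_sumr; apply: eq_bigr => j1 _.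
rewrite mulr_suml mulr_sumr mulr_sumr; apply: eq_bigr => j2 _.
rewrite !conjM !conj_chiX.
set Xv := X _ _.
set e1 := _%:R. set e2 := _%:R.
transitivity (e1 * (e2 * ((cj t * t) * (cj t * t) *
   ((chi (- (j1 - a1)) * chi j2 * chi k1 * chi (- i2)) ^+ a2) * Xv))).
  by rewrite !exprMn; ring.
rewrite conj_tau !mul1r -!chiD; congr (_ * (_ * (chi _ ^+ _ * _))); ring.
Qed.

End Entries.
End Phase.

Theorem lemma5 (R : realType) (d : nat) (hd : (2 <= d)%N) (X : 'M[R[i]]_(d * d)) :
  \sum_(a1 < d) \sum_(a2 < d)
     (tensmx (weyl R d a1 a2) (weyl R d a1 a2)) *m X
       *m adj (tensmx (weyl R d a1 a2) (weyl R d a1 a2))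
  = \sum_(a1 < d) \sum_(a2 < d)
     \tr (X *m tensmx (adj (weyl R d a1 a2)) (weyl R d a1 a2))
       *: tensmx (weyl R d a1 a2) (adj (weyl R d a1 a2)).
Proof.
case: d hd X => [|[|n]] // _ X.
apply/matrixP => p q.
case: (mxtens_indexP p) => i1 i2; case: (mxtens_indexP q) => k1 k2.
rewrite !summxE.
under eq_bigr do rewrite summxE.
under [RHS]eq_bigr do rewrite summxE.
under eq_bigr do under eq_bigr do rewrite lhs_entry.
under [RHS]eq_bigr do under eq_bigr do rewrite mxE rhs_entry.
under eq_bigr do rewrite -mulr_suml chi_sum.
under [RHS]eq_bigr do rewrite -mulr_sumr.
rewrite sum_pickl -[in RHS]mulr_sumr [in RHS]exchange_big /=.
under [in RHS]eq_bigr do rewrite exchange_big /=.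
under [in RHS]eq_bigr do under eq_bigr do rewrite -mulr_suml chi_sum subr_eq0 -mulrA.
under [in RHS]eq_bigr do rewrite sum_pickl.
have key : (i1 + i2 - k1 - k2 == 0) = (k2 == i2 + (i1 - k1)).
  by rewrite subr_eq0 eq_sym (_ : i1 + i2 - k1 = i2 + (i1 - k1)) //; ring.
rewrite key; case: eqP => [->|_]; last first.
  by rewrite !mul0r big1 // => a _; rewrite mul0r.
have t1 : (true%:R : R[i]) = 1 by [].
rewrite !t1 mul1r.
rewrite mul1r -!mulr_sumr; congr (_ * _).
have hinj : injective (fun b : 'I_n.+2 => i1 - b) by move=> x y /addrI /oppr_inj.
rewrite [RHS](reindex_inj hinj) /=.
apply: eq_bigr => b _; congr (X (mxtens_index (_, _)) (mxtens_index (_, _))); ring.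
Qed.
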